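(* Let $1\le p\le n-1$ and let $a\in R[t_1,\ldots,t_n]$ satisfy $s_p.a=a$. Then $T_pa=aT_p$ in $\mathcal H_{n,r}$.
   Context: Standing setup: $R$ is an integral domain, $n\ge 2$, $r\ge 1$, and $q,u_1,\ldots,u_r\in R$ with $q$ invertible in $R$ and $\Delta:=\prod_{1\le j<i\le r}(u_i-u_j)$ invertible in $R$. For $1\le c\le r$ let $F_c(X)\in R[X]$ be the unique polynomial of degree $\le r-1$ with $F_c(u_{c'})=\delta_{c,c'}\Delta$ for all $1\le c'\le r$. The modified Ariki–Koike (Shoji) algebra $\mathcal H_{n,r}=\mathcal H_{n,r}(R,q,u_1,\ldots,u_r)$ is the associative $R$-algebra generated by $t_1,\ldots,t_n,T_1,\ldots,T_{n-1}$ subject to: $(T_i-q)(T_i+q^{-1})=0$; $(t_i-u_1)\cdots(t_i-u_r)=0$; $T_iT_{i+1}T_i=T_{i+1}T_iT_{i+1}$; $T_iT_j=T_jT_i$ for $|i-j|\ge2$; $t_it_j=t_jt_i$; $T_jt_k=t_kT_j$ for $k\ne j,j+1$; and for $2\le j\le n$: $T_{j-1}t_j=t_{j-1}T_{j-1}+\Delta^{-2}\sum_{1\le c_1<c_2\le r}(u_{c_2}-u_{c_1})(q-q^{-1})F_{c_1}(t_{j-1})F_{c_2}(t_j)$ and $T_{j-1}t_{j-1}=t_jT_{j-1}-\Delta^{-2}\sum_{1\le c_1<c_2\le r}(u_{c_2}-u_{c_1})(q-q^{-1})F_{c_1}(t_{j-1})F_{c_2}(t_j)$. $R[t_1,\ldots,t_n]$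 is the (commutative) subalgebra generated by the $t_i$; it is isomorphic to $R[X_1,\ldots,X_n]/(\prod_{j=1}^r(X_i-u_j):1\le i\le n)$, and the symmetric group $\mathfrak S(n)$ acts on it by $R$-algebra automorphisms via $w.t_i=t_{w(i)}$. $s_p\in\mathfrak S(n)$ is the simple transposition $(p\ p+1)$. *)

(* Defs.v *)
From HB Require Import structures.
From mathcomp Require Import all_boot all_order all_algebra all_fingroup.
From mathcomp Require Import mpoly.
Set Implicit Arguments. Unset Strict Implicit. Unset Printing Implicit Defensive.
Import GRing.Theory.
Local Open Scope ring_scope.

(* Conventions (0-based indices):
   t i  (i : 'I_n)            stands for the paper's t_{i+1};
   T i  (i : 'I_n, i.+1 < n)   stands for the paper's T_{i+1};
   T i for i = n-1 is NOT a generator and is left unconstrained. *)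

Definition Delta (R : comNzRingType) (r : nat) (u : 'I_r -> R) : R :=
  \prod_(i < r) \prod_(j < r | (j < i)%N) (u i - u j).

Definition peval (R : comNzRingType) (A : algType R) (f : {poly R}) (x : A) : A :=
  \sum_(i < size f) f`_i *: x ^+ i.

Definition is_F_family (R : comNzRingType) (r : nat) (u : 'I_r -> R)
    (F : 'I_r -> {poly R}) : Prop :=
  forall c : 'I_r, (size (F c) <= r)%N /\
    forall c' : 'I_r, (F c).[u c'] = (c == c')%:R * Delta u.

Definition corr (R : comUnitRingType) (A : algType R) (r : nat) (q : R)
    (u : 'I_r -> R) (F : 'I_r -> {poly R}) (x y : A) : A :=
  \sum_(c1 < r) \sum_(c2 < r | (c1 < c2)%N)
     ((Delta u)^-2 * (u c2 - u c1) * (q - q^-1)) *: (peval (F c1) x * peval (F c2) y).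


(* The elements t, T of the R-algebra A satisfy the defining relations of the
   modified Ariki-Koike algebra H_{n,r}(R,q,u_1..u_r). *)
Definition AK_relations (R : comUnitRingType) (A : algType R) (n r : nat)
    (q : R) (u : 'I_r -> R) (F : 'I_r -> {poly R})
    (t : 'I_n -> A) (T : 'I_n -> A) : Prop :=
  (forall i : 'I_n, (i.+1 < n)%N -> (T i - q%:A) * (T i + (q^-1)%:A) = 0) /\
  (forall i : 'I_n, \prod_(c < r) (t i - (u c)%:A) = 0) /\
  (forall i j : 'I_n, val j = i.+1 -> (j.+1 < n)%N ->
      T i * T j * T i = T j * T i * T j) /\
  (forall i j : 'I_n, (i.+1 < n)%N -> (j.+1 < n)%N ->
      ((i.+2 <= j)%N || (j.+2 <= i)%N) -> T i * T j = T j * T i) /\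
  (forall i j : 'I_n, t i * t j = t j * t i) /\
  (forall j k : 'I_n, (j.+1 < n)%N -> val k != val j -> val k != j.+1 ->
      T j * t k = t k * T j) /\
  (* for 2 <= j <= n (here i = j-2, i' = j-1 in 0-based indexing) :
     T_{j-1} t_j = t_{j-1} T_{j-1} + corr(t_{j-1}, t_j)
     T_{j-1} t_{j-1} = t_j T_{j-1} - corr(t_{j-1}, t_j) *)
  (forall i i' : 'I_n, val i' = i.+1 ->
      T i * t i' = t i * T i + corr q u F (t i) (t i') /\
      T i * t i = t i' * T i - corr q u F (t i) (t i')).

Definition in_AK_ideal (R : comNzRingType) (n r : nat) (u : 'I_r -> R)
    (P : {mpoly R[n]}) : Prop :=
  exists c : 'I_n -> {mpoly R[n]},
    P = \sum_(i < n) c i * \prod_(j < r) ('X_i - (u j)%:MP).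

(* Main.v *)
Require Import Defs.
From HB Require Import structures.
From mathcomp Require Import all_boot all_order all_algebra all_fingroup.
From mathcomp Require Import mpoly.
Import GRing.Theory.
Local Open Scope ring_scope.

Lemma peval_horner (R : comNzRingType) (A : algType R) (f : {poly R}) (x : A) :
  peval f x = horner_alg x f.
Proof.
rewrite /peval /horner_alg /horner_morph (horner_coef_wide (n:=size f)); last exact: size_poly.
by apply: eq_bigr => i _; rewrite coef_map /= mulr_algl.
Qed.

Lemma Delta_unit_pair (R : comUnitRingType) (r : nat) (u : 'I_r -> R) (a b : 'I_r) :
  Delta u \is a GRing.unit -> (a < b)%N -> u b - u a \is a GRing.unit.
Proof.
move=> DU ab; move: DU; rewrite /Delta (bigD1 b) //= unitrM => /andP[H _].
by move: H; rewrite (bigD1 a) //= unitrM => /andP[].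
Qed.

Lemma uniq_roots_u (R : comUnitRingType) (r : nat) (u : 'I_r -> R) :
  Delta u \is a GRing.unit -> uniq_roots [seq u c | c <- enum 'I_r].
Proof.
move=> DU.
have: pairwise (fun a b : 'I_r => (a < b)%N) (enum 'I_r).
  rewrite -(pairwise_map val (fun a b => (a < b)%N)) val_enum_ord.
  rewrite -sorted_pairwise ?iota_ltn_sorted //; exact: ltn_trans.
elim: (enum 'I_r) => [|a s IH] //= /andP[Ha Hs].
rewrite IH // andbT all_map; apply: sub_all Ha => b ab /=.
by rewrite /diff_roots mulrC eqxx Delta_unit_pair.
Qed.

Lemma peval_root (R : idomainType) (A : algType R) r (u : 'I_r -> R)
  (F : 'I_r -> {poly R}) (x : A) (c : 'I_r) :
  Delta u \is a GRing.unit -> is_F_family u F ->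
  \prod_(c < r) (x - (u c)%:A) = 0 ->
  peval (F c) x * x = u c *: peval (F c) x.
Proof.
move=> DU HF Hx.
have [Q HQ] : exists Q, F c * ('X - (u c)%:P) =
    Q * \prod_(z <- [seq u c | c <- enum 'I_r]) ('X - z%:P).
  apply: uniq_roots_prod_XsubC; last exact: uniq_roots_u.
  apply/allP => z /mapP [j _ ->]; rewrite /root hornerM hornerXsubC (proj2 (HF c) j).
  by have [->|ne] := eqVneq c j; rewrite ?eqxx ?subrr ?mulr0 ?mul0r /=.

have := congr1 (horner_alg x) HQ.
rewrite !rmorphM /= rmorphB /= horner_algX horner_algC big_map big_enum /= rmorph_prod /=.
under eq_bigr do rewrite rmorphB /= horner_algX horner_algC.
rewrite Hx mulr0 -peval_horner mulrBr mulr_algr => /eqP; rewrite subr_eq0 => /eqP.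
done.
Qed.

Lemma comm_peval (R : comNzRingType) (A : algType R) (f : {poly R}) (a b : A) :
  GRing.comm a b -> GRing.comm a (peval f b).
Proof.
move=> h; rewrite /peval; apply: commr_sum => i _.
by rewrite /GRing.comm -scalerAr -scalerAl (commrX i h).
Qed.

Lemma prod_split_comm (A : pzRingType) (I : Type) (s : seq I) (a b : I -> A) :
  (forall i j, GRing.comm (b i) (a j)) ->
  \prod_(i <- s) (a i * b i) = (\prod_(i <- s) a i) * (\prod_(i <- s) b i).
Proof.
move=> hc; elim: s => [|x s IH]; first by rewrite !big_nil mulr1.
rewrite !big_cons IH -!mulrA; congr (_ * _); rewrite !mulrA; congr (_ * _).
by apply: commr_prod => j _; apply: hc.
Qed.

Lemma mmap1D (A : nzRingType) n (h : 'I_n -> A) :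
  (forall i j, GRing.comm (h i) (h j)) ->
  forall m1 m2, mmap1 h (m1 + m2)%MM = mmap1 h m1 * mmap1 h m2.
Proof.
move=> hc m1 m2; rewrite /mmap1 -prod_split_comm.
  by apply: eq_bigr => i _; rewrite mnmDE exprD.
by move=> i j; apply: commrX; apply: commr_sym; apply: commrX.
Qed.

Lemma mmapM (R : comNzRingType) (A : algType R) n (h : 'I_n -> A) :
  (forall i j, GRing.comm (h i) (h j)) ->
  forall p q : {mpoly R[n]},
  mmap (in_alg A) h (p * q) = mmap (in_alg A) h p * mmap (in_alg A) h q.
Proof.
move=> hc p q.
elim/mpolyind: p => [|c m p _ _ IH]; first by rewrite mul0r !mmap0 mul0r.
rewrite mulrDl !mmapD IH mulrDl; congr (_ + _).
rewrite -scalerAl !mmapZ mmapX -mulrA; congr (_ * _); clear IH.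
elim/mpolyind: q => [|c' m' q _ _ IHq]; first by rewrite mulr0 !mmap0 mulr0.
rewrite mulrDr !mmapD IHq mulrDr; congr (_ + _).
rewrite -scalerAr !mmapZ -mpolyXD !mmapX mmap1D // /=.
by rewrite !mulr_algl scalerAr.
Qed.

Lemma leib (A : pzRingType) (T k a a' b b' : A) :
  GRing.comm k a' ->
  T * a = a' * T + k * (a - a') -> T * b = b' * T + k * (b - b') ->
  T * (a * b) = (a' * b') * T + k * (a * b - a' * b').
Proof.
move=> hc ha hb.
rewrite mulrA ha mulrDl -mulrA hb mulrDr !mulrA -hc -!mulrA -addrA -mulrDr.
congr (_ + k * _).
by rewrite mulrBr mulrBl addrC addrA subrK.
Qed.

Theorem lemma2p6 (R : idomainType) (n r : nat) (q : R) (u : 'I_r -> R)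
    (F : 'I_r -> {poly R}) (A : algType R) (t T : 'I_n -> A)
    (p p' : 'I_n) (P : {mpoly R[n]}) :
  (2 <= n)%N -> (1 <= r)%N ->
  q \is a GRing.unit -> Delta u \is a GRing.unit ->
  is_F_family u F ->
  AK_relations q u F t T ->
  val p' = p.+1 ->
  in_AK_ideal u (P - msym (tperm p p') P) ->
  T p * mmap (in_alg A) t P = mmap (in_alg A) t P * T p.
Proof.
move=> n2 r1 qU DU HF [_ [Ht [_ [_ [Htt [HTt Hcorr]]]]]] Hp' [c Hc].
set phi := mmap (in_alg A) t.
set s := tperm p p'.
have phiM : forall a b, phi (a * b) = phi a * phi b by exact: mmapM.
have phiX : forall i, phi 'X_i = t i by move=> i; rewrite /phi mmapX mmap1U.
have phi1 : phi 1 = 1 by rewrite /phi -mpolyC1 mmapC /= scale1r.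
have e : phi (msym s P) = phi P.
  apply/eqP; rewrite eq_sym -subr_eq0 /phi -mmapB Hc raddf_sum /= big1 // => i _.
  rewrite -/phi.
  rewrite phiM (big_morph phi phiM phi1).
  under eq_bigr do rewrite /phi mmapB mmapC -/phi phiX.
  by rewrite Ht mulr0.
have pn : (p.+1 < n)%N by rewrite -Hp' ltn_ord.
have [Hc1 Hc2] := Hcorr p p' Hp'.
set x := t p in Hc1 Hc2 *. set y := t p' in Hc1 Hc2 *.
pose k : A := \sum_(c1 < r) \sum_(c2 < r | (c1 < c2)%N)
   ((Delta u)^-2 * (q - q^-1)) *: (peval (F c1) x * peval (F c2) y).
have kt : forall j, GRing.comm k (t j).
  move=> j; apply: commr_sym; apply: commr_sum => c1 _; apply: commr_sum => c2 _.
  rewrite /GRing.comm -scalerAr -scalerAl; congr (_ *: _).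
  by apply: commrM; apply: comm_peval; apply: Htt.
have px : forall c, peval (F c) x * x = u c *: peval (F c) x.
  by move=> c0; apply: peval_root => //; apply: Ht.
have py : forall c, peval (F c) y * y = u c *: peval (F c) y.
  by move=> c0; apply: peval_root => //; apply: Ht.
have kc : k * (y - x) = corr q u F x y.
  rewrite /corr /k mulr_suml; apply: eq_bigr => c1 _; rewrite mulr_suml.
  apply: eq_bigr => c2 _.
  have E : peval (F c1) x * peval (F c2) y * (y - x) =
      (u c2 - u c1) *: (peval (F c1) x * peval (F c2) y).
    rewrite mulrBr -!mulrA py.
    rewrite -(@comm_peval _ _ (F c2) _ _ (Htt p p')) mulrA px -scalerAr -scalerAl.
    by rewrite -scalerBl.
  by rewrite -scalerAl E scalerA mulrAC.
have kphi : forall g, GRing.comm k (phi g).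
  elim/mpolyind => [|c0 m g _ _ IH]; first by rewrite /phi mmap0; apply: commr0.
  rewrite /phi mmapD mmapZ mmapX -/phi; apply: commrD => //.
  apply: commrM; first by apply: commr_sym; apply: comm_alg.
  by apply: commr_prod => i _; apply: commrX.
have G : forall g, T p * phi g = phi (msym s g) * T p + k * (phi g - phi (msym s g)).
  have GM : forall a b, T p * phi a = phi (msym s a) * T p + k * (phi a - phi (msym s a)) ->
     T p * phi b = phi (msym s b) * T p + k * (phi b - phi (msym s b)) ->
     T p * phi (a * b) = phi (msym s (a * b)) * T p + k * (phi (a * b) - phi (msym s (a * b))).
    move=> a b ha hb; rewrite msymM !phiM; apply: leib => //.
  have G1 : T p * phi 1 = phi (msym s 1) * T p + k * (phi 1 - phi (msym s 1)).
    by rewrite msym1 phi1 subrr mulr0 addr0 mulr1 mul1r.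
  have GXi : forall i, T p * phi 'X_i = phi (msym s 'X_i) * T p + k * (phi 'X_i - phi (msym s 'X_i)).
    move=> i; have msX : msym s ('X_i : {mpoly R[n]}) = 'X_(s i).
      by rewrite /msym mmapX mmap1U.
    rewrite msX !phiX.
    have [->|ip] := eqVneq i p.
      by rewrite /s tpermL -/x -/y Hc2 -kc -mulrN opprB.
    have [->|ip'] := eqVneq i p'.
      by rewrite /s tpermR -/x -/y Hc1 kc.
    rewrite /s tpermD 1?eq_sym // subrr mulr0 addr0; apply: HTt => //.
    by rewrite -Hp'; exact: ip'.
  elim/mpolyind => [|c0 m g _ _ IH].
    by rewrite msym0 /phi !mmap0 subrr mulr0 mulr0 mul0r addr0.
  have GX : T p * phi 'X_[m] = phi (msym s 'X_[m]) * T p + k * (phi 'X_[m] - phi (msym s 'X_[m])).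
    rewrite mpolyXE_id; apply: (big_ind (fun g => T p * phi g = phi (msym s g) * T p + k * (phi g - phi (msym s g)))) => //.
    move=> i _; elim: (m i) => [|ee IHe]; first by rewrite expr0.
    by rewrite exprS; apply: GM.
  move: GX IH; rewrite msymD msymZ /phi !mmapD !mmapZ -/phi => GX IH.
  rewrite !mulr_algl mulrDr -(scalerAr c0 (T p)) GX IH mulrDl -scalerAl.
  rewrite opprD addrACA -scalerBr [k * (_ *: _ + _)]mulrDr -(scalerAr c0 k) scalerDr addrACA.
  done.
by rewrite G e subrr mulr0 addr0.
Qed.
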